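(* Let $F$ be a field, $t\ge 3$, and let $e_1,\dots,e_t$, $n_i$, $\sigma_i$ and $V$ be as follows: $e_1,\dots,e_t\in M_n(F)$ are nonzero pairwise orthogonal idempotents with $e_1+\cdots+e_t=I_n$, $n_i=\mathrm{rank}(e_i)$, $\sigma_1,\dots,\sigma_t\in F$ satisfy $\sum_i\sigma_ik_i\ne0$ for every integer tuple $\vec 0\ne(k_1,\dots,k_t)$ with $0\le k_i\le n_i$, and $V=\{a\in M_n(F): e_iae_j=0\ \forall i<j,\ \sum_i\sigma_i\mathrm{Tr}(e_iae_i)=0\}$. Let $u\in e_1M_n(F)e_2$ and $w\in e_2M_n(F)e_3$ with $uw\ne 0$. Then $U=F(u+w)+V$ is a Mathieu subspace of $M_n(F)$ containing $V$ as a proper subspace; in particular $V$ is not a maximal Mathieu subspace of $M_n(F)$.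
   Context: Let $\mathcal A$ be an associative algebra over a field $F$. An $F$-subspace $M\subseteq\mathcal A$ is a Mathieu subspace (MS) of $\mathcal A$ if for all $a,b,c\in\mathcal A$ such that $a^m\in M$ for all $m\ge 1$, there exists $N$ (depending on $a,b,c$) such that $ba^mc\in M$ for all $m\ge N$. A maximal MS of $\mathcal A$ is a proper MS of $\mathcal A$ that is not properly contained in any proper MS of $\mathcal A$. *)

(* Defs.v *)
From HB Require Import structures.
From mathcomp Require Import all_boot all_order all_algebra.
Set Implicit Arguments. Unset Strict Implicit. Unset Printing Implicit Defensive.
Import GRing.Theory.
Local Open Scope ring_scope.

Definition is_subspace (F : fieldType) (n : nat) (M : 'M[F]_n -> Prop) : Prop :=
  M 0 /\ (forall x y, M x -> M y -> M (x + y)) /\ (forall (c : F) x, M x -> M (c *: x)).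

Definition mathieu_subspace (F : fieldType) (n : nat) (M : 'M[F]_n -> Prop) : Prop :=
  is_subspace M /\
  forall a b c : 'M[F]_n, (forall m : nat, (1 <= m)%N -> M (a ^+ m)) ->
    exists N : nat, forall m : nat, (N <= m)%N -> M (b *m a ^+ m *m c).

Definition proper_sub (F : fieldType) (n : nat) (M : 'M[F]_n -> Prop) : Prop :=
  exists x, ~ M x.

Definition maximal_mathieu_subspace (F : fieldType) (n : nat) (M : 'M[F]_n -> Prop) : Prop :=
  mathieu_subspace M /\ proper_sub M /\
  forall M' : 'M[F]_n -> Prop, mathieu_subspace M' -> proper_sub M' ->
    (forall x, M x -> M' x) -> forall x, M' x -> M x.

(* Main.v *)
Require Import Defs.
From HB Require Import structures.
From mathcomp Require Import all_boot all_order all_algebra zify ring.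
Set Implicit Arguments. Unset Strict Implicit. Unset Printing Implicit Defensive.
Import GRing.Theory.
Local Open Scope ring_scope.

Lemma tr_idem_aux (F : fieldType) (n r : nat) (C : 'M[F]_(n, r)) (R : 'M[F]_(r, n)) :
  row_full C -> row_free R -> (C *m R) *m (C *m R) = C *m R -> \tr (C *m R) = r%:R.
Proof.
move=> hC hR PP.
have h1 : R *m C *m R = R.
  apply: (row_full_inj hC).
  by rewrite !mulmxA -[C *m R *m C *m R]mulmxA.
have h2 : R *m C = 1%:M.
  apply: (row_free_inj hR).
  by rewrite h1 mul1mx.
by rewrite mxtrace_mulC h2 mxtrace1.
Qed.

Lemma tr_idem (F : fieldType) (n : nat) (P : 'M[F]_n) :
  P *m P = P -> \tr P = (\rank P)%:R.
Proof.
move=> PP; rewrite -{1}(mulmx_base P); apply: tr_idem_aux.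
- exact: col_base_full.
- exact: row_base_free.
by rewrite mulmx_base.
Qed.

Lemma fitting (F : fieldType) (n' : nat) (A : 'M[F]_n'.+1) :
  exists g : {poly F}, horner_mx A (g * 'X) *m horner_mx A (g * 'X) = horner_mx A (g * 'X)
    /\ (horner_mx A (g * 'X) = 0 -> exists K, A ^+ K = 0).
Proof.
have CH := Cayley_Hamilton A.
have [k [r]] := multiplicity_XsubC (char_poly A) 0.
rewrite monic_neq0 ?char_poly_monic //= subr0 => r0 chiE.
have cop : coprimep r ('X ^+ k.+1) by apply: coprimep_expr; rewrite coprimepX.
have [[u1 u2] /= Hb] := Bezout_coprimepP _ _ cop.
have /size_poly1P [c c0 Hc] : size (u1 * r + u2 * 'X ^+ k.+1) == 1%N.
  by rewrite (eqp_size Hb) size_poly1.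
pose beta := c^-1 *: u1; pose alpha := c^-1 *: u2.
have Hab : beta * r + alpha * 'X ^+ k.+1 = 1.
  by rewrite /beta /alpha -!scalerAl -scalerDr Hc -mul_polyC -polyCM mulVf.
exists (alpha * 'X^k).
have gE : alpha * 'X^k * 'X = alpha * 'X ^+ k.+1 by rewrite -mulrA -exprSr.
rewrite gE.
have key : horner_mx A (alpha * 'X ^+ k.+1) * horner_mx A (beta * r) = 0.
  rewrite -rmorphM /=.
  have -> : alpha * 'X ^+ k.+1 * (beta * r) = (alpha * beta * 'X) * char_poly A.
    by rewrite chiE exprS; ring.
  by rewrite rmorphM /= CH mulr0.
have hb : horner_mx A (beta * r) = 1 - horner_mx A (alpha * 'X ^+ k.+1).
  by rewrite -(rmorph1 (horner_mx A)) -Hab rmorphD /= addrK.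
split.
  move: key; rewrite hb mulmxE mulrBr mulr1 => /eqP; rewrite subr_eq0 => /eqP.
  by [].
move=> E0; exists k.+1.
have : horner_mx A (beta * r) = 1 by rewrite hb E0 subr0.
move=> h; rewrite -[A ^+ k.+1]mulr1 -h -{1}(horner_mx_X A) -rmorphXn -rmorphM /=.
have -> : 'X ^+ k.+1 * (beta * r) = (beta * 'X) * char_poly A.
  by rewrite chiE exprS; ring.
by rewrite rmorphM /= CH mulr0.
Qed.

Section Blocks.
Variables (F : fieldType) (n' t : nat) (e : 'I_t -> 'M[F]_n'.+1).
Hypothesis he_idem : forall i, e i *m e i = e i.
Hypothesis he_orth : forall i j, i != j -> e i *m e j = 0.
Hypothesis he_sum : \sum_(i < t) e i = 1%:M.

Definition isL (x : 'M[F]_n'.+1) := forall i j : 'I_t, (i < j)%N -> e i *m x *m e j = 0.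

Lemma split1 (x y : 'M[F]_n'.+1) : x *m y = \sum_l x *m e l *m y.
Proof. by rewrite -mulmx_suml -mulmx_sumr he_sum mulmx1. Qed.

Lemma isL0 : isL 0.
Proof. by move=> i j _; rewrite mulmx0 mul0mx. Qed.

Lemma isL1 : isL 1%:M.
Proof. move=> i j lt; rewrite mulmx1 he_orth //; apply/eqP => h; by move: lt; rewrite h ltnn. Qed.

Lemma isLD x y : isL x -> isL y -> isL (x + y).
Proof. by move=> hx hy i j lt; rewrite mulmxDr mulmxDl hx // hy // addr0. Qed.

Lemma isLZ c x : isL x -> isL (c *: x).
Proof. by move=> hx i j lt; rewrite -scalemxAr -scalemxAl hx // scaler0. Qed.

Lemma isLM x y : isL x -> isL y -> isL (x *m y).
Proof.
move=> hx hy i j lt; rewrite (split1 x y) mulmx_sumr mulmx_suml big1 // => l _.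
case: (ltnP i l) => h.
  by rewrite !mulmxA (hx i l h) !mul0mx.
have h' : (l < j)%N by apply: leq_ltn_trans h lt.
have := hy l j h'; rewrite -mulmxA => hy'.
by rewrite -{1}(he_idem l) -!mulmxA hy' !mulmx0.
Qed.

Lemma isLX x m : isL x -> isL (x ^+ m).
Proof.
move=> hx; elim: m => [|m IH]; first by rewrite expr0; exact: isL1.
by rewrite exprS -mulmxE; apply: isLM.
Qed.

Lemma diagM x y k : isL x -> isL y ->
  e k *m (x *m y) *m e k = (e k *m x *m e k) *m (e k *m y *m e k).
Proof.
move=> hx hy; rewrite (split1 x y) mulmx_sumr mulmx_suml (bigD1 k) //= big1 ?addr0.
  rewrite -!mulmxA; congr (_ *m (_ *m _)).
  by rewrite (mulmxA (e k) (e k)) he_idem.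
move=> l /eqP lk.
case: (ltngtP k l) => h.
- by rewrite !mulmxA (hx k l h) !mul0mx.
- have := hy l k h; rewrite -mulmxA => hy'.
  by rewrite -{1}(he_idem l) -!mulmxA hy' !mulmx0.
- by move/val_inj: h => h; rewrite h in lk.
Qed.

Lemma zero_diag_idem E : isL E -> E *m E = E ->
  (forall i, e i *m E *m e i = 0) -> E = 0.
Proof.
move=> hL EE hd.
suff H : forall m (j : 'I_t), (t - j <= m)%N -> E *m e j = 0.
  rewrite -[E]mulmx1 -he_sum mulmx_sumr big1 // => j _.
  by apply: (H t); rewrite leq_subr.
elim=> [|m IH] j hj.
  by move: (ltn_ord j) hj; lia.
rewrite -{1}EE (split1 E E) mulmx_suml big1 // => l _.
case: (ltnP j l) => h.
  by rewrite (IH l) ?mul0mx //; move: hj h; lia.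
have hz : e l *m E *m e j = 0.
  case: (ltngtP l j) h => //= [lt _|/val_inj -> _]; first exact: hL.
  exact: hd.
move: hz; rewrite -mulmxA => hz.
by rewrite -!mulmxA hz mulmx0.
Qed.

Lemma isL_horner a p : isL a -> isL (horner_mx a p).
Proof.
move=> ha; rewrite -[p]coefK poly_def rmorph_sum /=.
apply: (big_ind isL isL0 isLD) => i _.
by rewrite horner_mxZ rmorphXn /= horner_mx_X; apply/isLZ/isLX.
Qed.

Variable sigma : 'I_t -> F.
Definition psi (x : 'M[F]_n'.+1) := \sum_(i < t) sigma i * \tr (e i *m x *m e i).

Lemma psi0 : psi 0 = 0.
Proof. by rewrite /psi big1 // => i _; rewrite mulmx0 mul0mx mxtrace0 mulr0. Qed.

Lemma psiD x y : psi (x + y) = psi x + psi y.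
Proof.
by rewrite /psi -big_split; apply: eq_bigr => i _; rewrite mulmxDr mulmxDl mxtraceD mulrDr.
Qed.

Lemma psiZ c x : psi (c *: x) = c * psi x.
Proof.
rewrite /psi mulr_sumr; apply: eq_bigr => i _.
by rewrite -scalemxAr -scalemxAl mxtraceZ mulrCA.
Qed.

Hypothesis hsigma : forall k : 'I_t -> nat, (exists i, k i <> 0%N) ->
      (forall i, (k i <= \rank (e i))%N) ->
      \sum_(i < t) sigma i * (k i)%:R != 0.

Lemma nilpL a : isL a -> (forall m, (1 <= m)%N -> psi (a ^+ m) = 0) ->
  exists K, a ^+ K = 0.
Proof.
move=> ha hpsi.
have [g [EE HK]] := fitting a; apply: HK.
set E := horner_mx a (g * 'X) in EE *.
have hE : isL E by apply: isL_horner.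
have psiE : psi E = 0.
  rewrite /E -[g * 'X]coefK poly_def rmorph_sum /=.
  apply: (big_ind (fun x => psi x = 0) psi0) => [x y hx hy|i _]; first by rewrite psiD hx hy addr0.
  rewrite horner_mxZ rmorphXn /= horner_mx_X psiZ coefMX.
  case: (i : nat) => [|m]; first by rewrite mul0r.
  by rewrite hpsi ?mulr0.
have hdi : forall i, (e i *m E *m e i) *m (e i *m E *m e i) = e i *m E *m e i.
  by move=> i; rewrite -diagM // EE.
case: (boolP [forall i, e i *m E *m e i == 0]) => [/forallP h|/forallPn [i hi]].
  by apply: zero_diag_idem => // i; apply/eqP.
exfalso.
have Hs := hsigma (k := fun i => \rank (e i *m E *m e i)).
have H0 : \sum_(i < t) sigma i * (\rank (e i *m E *m e i))%:R = 0.
  by rewrite -[RHS]psiE /psi; apply: eq_bigr => j _; rewrite tr_idem.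
move: Hs; rewrite H0 eqxx /= => Hs; suff : false by []; apply: Hs => [|j]; last exact: mxrankM_maxr.
by exists i; apply/eqP; rewrite mxrank_eq0.
Qed.

End Blocks.
Unset Implicit Arguments.

Theorem mainTheorem3 (F : fieldType) (n t : nat) (ht : (3 <= t)%N)
  (e : 'I_t -> 'M[F]_n) (sigma : 'I_t -> F)
  (he_nz : forall i, e i != 0)
  (he_idem : forall i, e i *m e i = e i)
  (he_orth : forall i j, i != j -> e i *m e j = 0)
  (he_sum : \sum_(i < t) e i = 1%:M)
  (hsigma : forall k : 'I_t -> nat, (exists i, k i <> 0%N) ->
      (forall i, (k i <= \rank (e i))%N) ->
      \sum_(i < t) sigma i * (k i)%:R != 0)
  (V : 'M[F]_n -> Prop)
  (hV : forall a, V a <->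
      ((forall i j : 'I_t, (i < j)%N -> e i *m a *m e j = 0) /\
       \sum_(i < t) sigma i * \tr (e i *m a *m e i) = 0))
  (i1 i2 i3 : 'I_t) (hi1 : val i1 = 0%N) (hi2 : val i2 = 1%N) (hi3 : val i3 = 2%N)
  (u w : 'M[F]_n)
  (hu : exists x, u = e i1 *m x *m e i2)
  (hw : exists x, w = e i2 *m x *m e i3)
  (huw : u *m w != 0) :
  let U := fun x : 'M[F]_n => exists (c : F) (v : 'M[F]_n), V v /\ x = c *: (u + w) + v in
  mathieu_subspace U /\ (forall x, V x -> U x) /\ (exists x, U x /\ ~ V x) /\
  ~ maximal_mathieu_subspace V.
Proof.
destruct n as [|n'].
  by exfalso; apply: (negP (he_nz i1)); apply/eqP; apply: flatmx0.
move=> U.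
have hV' : forall a, V a <-> isL e a /\ psi e sigma a = 0 := hV.
have ne : forall (i j : 'I_t), val i <> val j -> i != j.
  by move=> i j h; apply/eqP => h'; apply: h; rewrite h'.
have d12 : i1 != i2 by apply: ne; rewrite hi1 hi2.
have d13 : i1 != i3 by apply: ne; rewrite hi1 hi3.
have d23 : i2 != i3 by apply: ne; rewrite hi2 hi3.
have d21 : i2 != i1 by rewrite eq_sym.
have d31 : i3 != i1 by rewrite eq_sym.
have lt12 : (i1 < i2)%N by rewrite hi1 hi2.
have lt13 : (i1 < i3)%N by rewrite hi1 hi3.
have lt23 : (i2 < i3)%N by rewrite hi2 hi3.
have [X hX] := hu; have [Y hY] := hw.
have u1 : e i1 *m u = u by rewrite hX !mulmxA he_idem.
have u2 : u *m e i2 = u by rewrite hX -mulmxA he_idem.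
have w2 : e i2 *m w = w by rewrite hY !mulmxA he_idem.
have w3 : w *m e i3 = w by rewrite hY -mulmxA he_idem.
have u3 : u *m e i3 = 0 by rewrite -u2 -mulmxA he_orth // mulmx0.
have w1 : e i1 *m w = 0 by rewrite -w2 mulmxA he_orth // mul0mx.
have unz : u != 0 by apply: contraNneq huw => ->; rewrite mul0mx.
have s1 : e i1 *m (u + w) = u by rewrite mulmxDr u1 w1 addr0.
have s3 : (u + w) *m e i3 = w by rewrite mulmxDl u3 w3 add0r.
have blk13 : forall x, U x -> e i1 *m x *m e i3 = 0.
  move=> x [c [v [/hV' [Lv _] ->]]].
  by rewrite mulmxDr mulmxDl -scalemxAr -scalemxAl -(mulmxA (e i1) (u + w)) s3 w1 scaler0 Lv // add0r.
have blk12 : forall c v, V v -> e i1 *m (c *: (u + w) + v) *m e i2 = c *: u.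
  move=> c v /hV' [Lv _].
  by rewrite mulmxDr mulmxDl -scalemxAr -scalemxAl s1 u2 Lv // addr0.
have V0 : V 0 by apply/hV'; split; [exact: isL0 | exact: psi0].
have VD : forall x y, V x -> V y -> V (x + y).
  move=> x y /hV' [Lx px] /hV' [Ly py]; apply/hV'; split.
    exact: isLD.
  by rewrite psiD px py addr0.
have VZ : forall c x, V x -> V (c *: x).
  move=> c x /hV' [Lx px]; apply/hV'; split.
    exact: isLZ.
  by rewrite psiZ px mulr0.
have Us : U (u + w) by exists 1, 0; rewrite scale1r addr0.
have nVs : ~ V (u + w).
  move=> Vs; have := blk12 1 0 V0; rewrite !scale1r addr0.
  by have [Ls _] := (proj1 (hV' (u + w)) Vs); rewrite Ls // => h; move: unz; rewrite -h eqxx.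
have VU : forall x, V x -> U x by move=> x Vx; exists 0, x; rewrite scale0r add0r.
have msU : mathieu_subspace U.
  split.
    split; first by exists 0, 0; rewrite scale0r addr0.
    split.
      move=> x y [c1 [v1 [V1 ->]]] [c2 [v2 [V2 ->]]].
      exists (c1 + c2), (v1 + v2); split; first exact: VD.
      by rewrite scalerDl addrACA.
    move=> c x [c1 [v1 [V1 ->]]].
    exists (c * c1), (c *: v1); split; first exact: VZ.
    by rewrite scalerDr scalerA.
  move=> a b c0 Ha.
  have [c1 [v1 [V1 ha]]] := Ha 1%N isT.
  rewrite expr1 in ha.
  have [Lv1 _] := proj1 (hV' v1) V1.
  have c10 : c1 = 0.
    have := blk13 _ (Ha 2%N isT).
    rewrite expr2 -mulmxE mulmxA -mulmxA.
    have -> : e i1 *m a = c1 *: u + e i1 *m v1 by rewrite ha mulmxDr -scalemxAr s1.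
    have -> : a *m e i3 = c1 *: w + v1 *m e i3 by rewrite ha mulmxDl -scalemxAl s3.
    have z1 : u *m (v1 *m e i3) = 0 by rewrite -u2 -mulmxA (mulmxA (e i2)) Lv1 // mulmx0.
    have z2 : e i1 *m v1 *m w = 0 by rewrite -w2 mulmxA Lv1 // mul0mx.
    have z3 : e i1 *m v1 *m (v1 *m e i3) = 0.
      by rewrite mulmxA -(mulmxA (e i1)) (isLM he_idem he_sum Lv1 Lv1).
    rewrite mulmxDl !mulmxDr -!scalemxAl -!scalemxAr z1 z2 z3 !scaler0 !addr0.
    by move/eqP; rewrite !scaler_eq0 (negPf huw) orbF orbb => /eqP.
  rewrite c10 scale0r add0r in ha; subst a.
  have hp : forall m, (1 <= m)%N -> psi e sigma (v1 ^+ m) = 0.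
    move=> m hm; have [cm [vm [Vm hm']]] := Ha m hm.
    have Lm : isL e (v1 ^+ m) by apply: isLX.
    have := blk12 cm vm Vm; rewrite -hm' Lm // => /eqP; rewrite eq_sym scaler_eq0 (negPf unz) orbF.
    move=> /eqP cm0; rewrite cm0 scale0r add0r in hm'.
    by rewrite hm'; have [] := proj1 (hV' vm) Vm.
  have [K hK] := nilpL he_idem he_orth he_sum hsigma Lv1 hp.
  exists K => m hm.
  rewrite -(subnK hm) exprD hK mulr0 mulmx0 mul0mx.
  exact: VU.
split; first exact: msU.
split; first exact: VU.
split; first by exists (u + w).
move=> [_ [_ Hmax]].
apply: nVs; apply: (Hmax U msU) => //.
exists (u *m w) => /blk13.
by rewrite mulmxA u1 -mulmxA w3 => h; move: huw; rewrite h eqxx.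
Qed.
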